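(* Every cancellative monoid that is left-amenable or right-amenable is sofic.
   Context: A monoid $M$ is cancellative if $st=st'$ implies $t=t'$ and $ts=t's$ implies $t=t'$. $M$ is left-amenable (resp. right-amenable) if there is a mean on $\ell^\infty(M)$ (a positive linear functional of norm one taking value $1$ on the constant function $1$) invariant under all left translations (resp. all right translations) by elements of $M$. For a non-empty finite set $X$, $\mathrm{Map}(X)$ is the monoid of all maps $X\to X$ under composition (identity $\mathrm{Id}_X$) with the Hamming metric $d_X(f,g)=|\{x\in X : f(x)\ne g(x)\}|/|X|$. For finite $K\subset M$ and $\varepsilon,\alpha>0$, a map $\varphi\colon M\to\mathrm{Map}(X)$ is a $(K,\varepsilon)$-morphism if $d_X(\varphi(k_1k_2),\varphi(k_1)\varphi(k_2))\le\varepsilon$ for all $k_1,k_2\in K$ and $d_X(\varphi(1_M),\mathrm{Id}_X)\le\varepsilon$; it is $(K,\alpha)$-injective if $d_X(\varphi(k_1),\varphi(k_2))\ge\alpha$ for all distinct $k_1,k_2\in K$. $M$ is sofic if for every finite $K\subset M$ and every $\varepsilon>0$ there exist a non-empty finite set $X$ and a $(K,1-\varepsilon)$-injective $(K,\varepsilon)$-morphism $\varphi\colon M\to\mathrm{Map}(X)$. *)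

(* Defs.v *)
From mathcomp Require Import all_boot.
From Stdlib Require Import Reals List.
Set Implicit Arguments. Unset Strict Implicit.
Open Scope R_scope.

Section Defs.
Variable M : Type.
Variable op : M -> M -> M.
Variable e : M.

Definition is_monoid : Prop :=
  (forall a b c, op a (op b c) = op (op a b) c) /\
  (forall a, op e a = a) /\ (forall a, op a e = a).

Definition cancellative : Prop :=
  (forall s t t', op s t = op s t' -> t = t') /\
  (forall s t t', op t s = op t' s -> t = t').

Definition bounded (f : M -> R) : Prop := exists C, forall x, Rabs (f x) <= C.

(* a mean on l^oo(M): m is only constrained on bounded functions *)
Definition is_mean (m : (M -> R) -> R) : Prop :=
  (forall f g, bounded f -> bounded g -> m (fun x => f x + g x) = m f + m g) /\
  (forall (a : R) f, bounded f -> m (fun x => a * f x) = a * m f) /\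
  (forall f, bounded f -> (forall x, 0 <= f x) -> 0 <= m f) /\
  (* operator norm <= 1 w.r.t. the sup norm (= 1 together with m 1 = 1) *)
  (forall f C, (forall x, Rabs (f x) <= C) -> Rabs (m f) <= C) /\
  m (fun _ => 1) = 1.

Definition left_amenable : Prop :=
  exists m, is_mean m /\
    forall s f, bounded f -> m (fun x => f (op s x)) = m f.

Definition right_amenable : Prop :=
  exists m, is_mean m /\
    forall s f, bounded f -> m (fun x => f (op x s)) = m f.

Definition hamming (X : finType) (f g : X -> X) : R :=
  INR #|[pred x | f x != g x]| / INR #|X|.

Definition is_K_eps_morphism (X : finType) (K : list M) (eps : R)
    (phi : M -> X -> X) : Prop :=
  (forall k1 k2, In k1 K -> In k2 K ->
     hamming (phi (op k1 k2)) (fun x => phi k1 (phi k2 x)) <= eps) /\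
  hamming (phi e) (fun x => x) <= eps.

Definition is_K_alpha_injective (X : finType) (K : list M) (alpha : R)
    (phi : M -> X -> X) : Prop :=
  forall k1 k2, In k1 K -> In k2 K -> k1 <> k2 -> alpha <= hamming (phi k1) (phi k2).

Definition sofic : Prop :=
  forall (K : list M) (eps : R), 0 < eps ->
    exists (X : finType), #|X| != 0%nat /\
      exists phi : M -> X -> X,
        is_K_alpha_injective K (1 - eps) phi /\ is_K_eps_morphism K eps phi.
End Defs.

(* Main.v *)
Require Import Defs.
From mathcomp Require Import all_boot.
From Stdlib Require Import Reals List.
From mathcomp Require Import all_boot boolp classical_sets filter.
From Stdlib Require Import Lra FunctionalExtensionality.
Set Implicit Arguments. Unset Strict Implicit. Unset Printing Implicit Defensive.
Local Open Scope nat_scope.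

Section Glue.
Local Open Scope classical_set_scope.
Variable X : eqType.

Definition F0 : set_system (seq X) :=
  fun A => exists l0 : seq X, forall l, {subset l0 <= l} -> A l.

Lemma F0_proper : ProperFilter F0.
Proof.
split.
  by move=> [l0 H]; apply: (H l0).
split.
- by exists [::].
- move=> A B [l1 H1] [l2 H2]; exists (l1 ++ l2) => l sl; split.
    by apply: H1 => y yl; apply: sl; rewrite mem_cat yl.
  by apply: H2 => y yl; apply: sl; rewrite mem_cat yl orbT.
- by move=> P Q PQ [l0 H]; exists l0 => l sl; apply: PQ; apply: H.
Qed.

Lemma ultra_union T (U : set_system T) (A B : set T) : UltraFilter U ->
  U (A `|` B) -> U A \/ U B.
Proof.
move=> UU UAB; have UP : ProperFilter U := @ultra_proper _ _ UU; have UF : Filter U := @filter_filter _ _ UP; case: (in_ultra_setVsetC A UU) => [|UnA]; first by left.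
right; have H := @filterI _ U UF _ _ UAB UnA.
by apply: (@filterS _ U UF _ _ _ H) => x [[Ax|Bx] nAx] //; case: nAx.
Qed.

Lemma ultra_fin T (U : set_system T) (g : T -> nat) k : UltraFilter U ->
  U [set F | g F < k] -> exists i, i < k /\ U [set F | g F = i].
Proof.
move=> UU; have UP : ProperFilter U := @ultra_proper _ _ UU.
have UF : Filter U := @filter_filter _ _ UP.
elim: k => [|k IH] U0.
  by exfalso; apply: (filter_not_empty U); apply: (@filterS _ U UF _ _ _ U0) => F.
have : U ([set F | g F < k] `|` [set F | g F = k]).
  apply: (@filterS _ U UF _ _ _ U0) => F /=; rewrite ltnS leq_eqVlt orbC.
  by case/orP => [-> | /eqP ->]; [left|right].
case/(ultra_union UU) => [/IH [i [ik Ui]]|Uk].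
  by exists i; split => //; apply: ltnW.
by exists k; split.
Qed.

Lemma ultra_glue (n : nat) (C : X -> X -> nat -> nat -> Prop) :
  (forall F : seq X, exists c : X -> nat, (forall x, x \in F -> c x < n) /\
     (forall x x', x \in F -> x' \in F -> C x x' (c x) (c x'))) ->
  exists c : X -> nat, (forall x, c x < n) /\ (forall x x', C x x' (c x) (c x')).
Proof.
move=> H.
have [U [UU F0U]] := ultraFilterLemma F0_proper.
have UP : ProperFilter U := @ultra_proper _ _ UU. have UF : Filter U := @filter_filter _ _ UP.
pose cF (F : seq X) := proj1_sig (cid (H F)).
have cFP F := proj2_sig (cid (H F)).
have ex x : exists i, i < n /\ U [set F | cF F x = i].
  have : U [set F | cF F x < n].
    apply: F0U; exists [:: x] => l sl; apply: (proj1 (cFP l)).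
    by apply: sl; rewrite inE.
  exact: (ultra_fin UU).
pose c x := proj1_sig (cid (ex x)).
have cP x := proj2_sig (cid (ex x)).
exists c; split => [x|x x']; first exact: (proj1 (cP x)).
have U3 : U ([set F | cF F x = c x] `&` [set F | cF F x' = c x'] `&` [set F | x \in F /\ x' \in F]).
  apply: (@filterI _ U UF); first by apply: (@filterI _ U UF); [exact: (proj2 (cP x))|exact: (proj2 (cP x'))].
  apply: F0U; exists [:: x; x'] => l sl; split; apply: sl; rewrite !inE eqxx ?orbT //.
have [F [[e1 e2] [xF x'F]]] : exists F, ([set F | cF F x = c x] `&` [set F | cF F x' = c x'] `&` [set F | x \in F /\ x' \in F]) F.
  apply: contrapT => nF; apply: (filter_not_empty U); apply: (@filterS _ U UF _ _ _ U3) => F HF; apply: nF; by exists F.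
by rewrite -e1 -e2; apply: (proj2 (cFP F)).
Qed.
End Glue.

Section Hall.
Variables (X Y : eqType) (y0 : Y).

Definition NA (N : X -> seq Y) (A : seq X) := undup (flatten (map N A)).

Lemma mem_NA N A y : (y \in NA N A) = has (fun x => y \in N x) A.
Proof.
rewrite mem_undup; apply/flatten_mapP/hasP => -[x xA yx]; by exists x.
Qed.

Definition hallc (N : X -> seq Y) (l : seq X) :=
  forall A, uniq A -> {subset A <= l} -> size A <= size (NA N A).

Lemma hall_ind n : forall (l : seq X) (N : X -> seq Y), size l <= n -> uniq l -> hallc N l ->
  exists f : X -> Y, {in l &, injective f} /\ {in l, forall x, f x \in N x}.
Proof.
elim: n => [|n IH] l N.
  rewrite leqn0 => /nilP -> _ _; exists (fun _ => y0); split => //.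
move=> sl ul hl.
case: (pselect (exists A, [/\ uniq A, {subset A <= l}, 0 < size A, size A < size l &
                     size (NA N A) = size A])).
- move=> [A [uA sAl A0 Al tA]].
  have [f1 [inj1 in1]] : exists f : X -> Y, {in A &, injective f} /\ {in A, forall x, f x \in N x}.
    apply: IH => //; first by rewrite -ltnS; apply: leq_trans sl.
    by move=> B uB sBA; apply: hl => // x /sBA /sAl.
  pose l2 := [seq x <- l | x \notin A].
  pose N2 x := [seq y <- N x | y \notin NA N A].
  have [f2 [inj2 in2]] : exists f : X -> Y, {in l2 &, injective f} /\ {in l2, forall x, f x \in N2 x}.
    apply: IH; last 1 first.
    + move=> B uB sBl2.
      have uAB : uniq (A ++ B).
        rewrite cat_uniq uA uB andbT /=; apply/hasP => -[x /sBl2].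
        by rewrite mem_filter => /andP [/negPf ->].
      have sABl : {subset A ++ B <= l}.
        by move=> x; rewrite mem_cat => /orP [/sAl //| /sBl2]; rewrite mem_filter => /andP [].
      have := hl _ uAB sABl.
      have : size (NA N (A ++ B)) <= size (NA N A ++ NA N2 B).
        apply: uniq_leq_size; first exact: undup_uniq.
        move=> y; rewrite mem_NA has_cat mem_cat => /orP [hA|/hasP [x xB yx]].
          by rewrite mem_NA hA.
        case yA: (y \in NA N A) => //=.
        by rewrite mem_NA; apply/hasP; exists x => //; rewrite mem_filter yA.
      rewrite !size_cat tA => h1 h2.
      by rewrite -(leq_add2l (size A)); apply: leq_trans h2 h1.
    + rewrite -ltnS; apply: leq_trans sl.
      rewrite size_filter -(count_predC (mem A) l) -addn1 addnC leq_add2r.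
      have [a aA] : exists a, a \in A by case: (A) A0 => // a ? _; exists a; rewrite inE eqxx.
      by rewrite -has_count; apply/hasP; exists a; [exact: sAl|].
    + exact: filter_uniq.
  exists (fun x => if x \in A then f1 x else f2 x); split.
  + move=> x x' xl x'l; case xA: (x \in A); case x'A: (x' \in A).
    * exact: inj1.
    * have: f2 x' \in N2 x' by apply: in2; rewrite mem_filter x'A.
      rewrite mem_filter => /andP [nNA _] e1; move: nNA; rewrite -e1 mem_NA.
      by move/negP; case; apply/hasP; exists x => //; apply: in1.
    * have: f2 x \in N2 x by apply: in2; rewrite mem_filter xA.
      rewrite mem_filter => /andP [nNA _] e1; move: nNA; rewrite e1 mem_NA.
      by move/negP; case; apply/hasP; exists x' => //; apply: in1.
    * by apply: inj2; rewrite mem_filter ?xA ?x'A.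
  + move=> x xl; case xA: (x \in A); first exact: in1.
    have: f2 x \in N2 x by apply: in2; rewrite mem_filter xA.
    by rewrite mem_filter => /andP [].
- move=> nt.
  case: l sl ul hl nt => [|x l'] sl ul hl nt.
    by exists (fun _ => y0); split.
  have : 1 <= size (NA N [:: x]) by apply: (hl [:: x]) => // z; rewrite inE => /eqP ->; rewrite inE eqxx.
  case NAx: (NA N [:: x]) => [|y s] // _.
  have yx : y \in N x.
    have : y \in NA N [:: x] by rewrite NAx inE eqxx.
    by rewrite mem_NA /= orbF.
  pose N' z := [seq w <- N z | w != y].
  have [f' [inj' in']] : exists f : X -> Y, {in l' &, injective f} /\ {in l', forall x, f x \in N' x}.
    apply: IH => //; first by move: ul => /andP [].
    move=> B uB sBl'; case: B uB sBl' => [//|b B] uB sBl'.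
    have := (hl (b :: B) uB).
    have sBl : {subset b :: B <= x :: l'} by move=> z /sBl' zl; rewrite inE zl orbT.
    move/(_ sBl) => _.
    have h : size (b :: B) + 1 <= size (NA N (b :: B)).
      rewrite addn1; case: (leqP (size (NA N (b :: B))) (size (b :: B))) => // h.
      exfalso; apply: nt; exists (b :: B); split => //.
      - have := uniq_leq_size uB sBl'; rewrite /= => h2; by rewrite ltnS.
      - by apply/eqP; rewrite eqn_leq h (hl (b :: B) uB sBl).
    have : size (NA N (b :: B)) <= size (y :: NA N' (b :: B)).
      apply: uniq_leq_size; first exact: undup_uniq.
      move=> w; rewrite mem_NA inE => /hasP [z zB wz].
      case wy: (w == y) => //=; rewrite mem_NA; apply/hasP; exists z => //.
      by rewrite mem_filter wy.
    rewrite /= => h2; rewrite -(leq_add2r 1); apply: leq_trans h _.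
    by rewrite addn1.
  exists (fun z => if z == x then y else f' z); split.
  + move=> z z' zl z'l; case zx: (z == x); case z'x: (z' == x).
    * by rewrite (eqP zx) (eqP z'x).
    * have : f' z' \in N' z' by apply: in'; move: z'l; rewrite inE z'x.
      by rewrite mem_filter => /andP [/negP nf _] e1; case: nf; rewrite -e1.
    * have : f' z \in N' z by apply: in'; move: zl; rewrite inE zx.
      by rewrite mem_filter => /andP [/negP nf _] e1; case: nf; rewrite e1.
    * by apply: inj'; [move: zl|move: z'l]; rewrite inE ?zx ?z'x.
  + move=> z; rewrite inE; case zx: (z == x) => /= zl; first by rewrite (eqP zx).
    by have := in' z zl; rewrite mem_filter => /andP [].
Qed.

Lemma hall (l : seq X) (N : X -> seq Y) : uniq l -> hallc N l ->
  exists f : X -> Y, {in l &, injective f} /\ {in l, forall x, f x \in N x}.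
Proof. exact: (@hall_ind (size l)). Qed.
End Hall.

Section Mean.
Local Open Scope R_scope.
Variable M : Type.
Variable m : (M -> R) -> R.
Hypothesis hm : is_mean m.

Definition ind (P : M -> Prop) : M -> R := fun x => if pselect (P x) then 1 else 0.

Lemma ind_bounded P : Defs.bounded (ind P).
Proof. exists 1 => x; rewrite /ind; destruct (pselect (P x)); rewrite ?Rabs_R1 ?Rabs_R0; lra. Qed.

Lemma ind_T (P : M -> Prop) x : P x -> ind P x = 1.
Proof. by rewrite /ind; case: (pselect (P x)). Qed.
Lemma ind_F (P : M -> Prop) x : ~ P x -> ind P x = 0.
Proof. by rewrite /ind; case: (pselect (P x)). Qed.

Definition sumf (fs : seq (M -> R)) : M -> R :=
  fun x => foldr (fun f acc => (f x + acc)) 0 fs.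

Lemma sumf_cons f fs x : sumf (f :: fs) x = Rplus (f x) (sumf fs x).
Proof. by []. Qed.

Definition sumR (l : seq R) := foldr Rplus 0 l.

Lemma sumf_bounded fs : (forall f, List.In f fs -> Defs.bounded f) -> Defs.bounded (sumf fs).
Proof.
elim: fs => [|f fs IH] H.
  by exists 0 => x; rewrite /sumf /= Rabs_R0; lra.
have [C1 h1] := H f (or_introl erefl).
have [C2 h2] : Defs.bounded (sumf fs) by apply: IH => g gi; apply: H; right.
exists (C1 + C2) => x; rewrite /sumf /=.
apply: Rle_trans (Rabs_triang _ _) _; apply: Rplus_le_compat; [exact: h1|exact: h2].
Qed.

Lemma m0 : m (fun _ => 0) = 0.
Proof.
have [_ [hs _]] := hm.
have b1 : Defs.bounded (fun _ : M => 1) by exists 1 => x; rewrite Rabs_R1; lra.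
have := hs 0 (fun _ => 1) b1.
move=> H; rewrite [in RHS]Rmult_0_l in H; rewrite -H; congr m; apply: functional_extensionality => x; lra.
Qed.

Lemma m_sumf fs : (forall f, List.In f fs -> Defs.bounded f) -> m (sumf fs) = sumR (map m fs).
Proof.
elim: fs => [|f fs IH] H; first exact: m0.
have [ha _] := hm.
rewrite /= -IH; last by move=> g gi; apply: H; right.
apply: ha; first by apply: H; left.
by apply: sumf_bounded => g gi; apply: H; right.
Qed.

Lemma m_ext f g : (forall x, f x = g x) -> m f = m g.
Proof. by move=> h; congr m; apply: functional_extensionality. Qed.

End Mean.

Section Double.
Local Open Scope R_scope.
Variable M : Type.
Variables (op : M -> M -> M) (e : M).
Hypothesis hcan : cancellative op.
Variable m : (M -> R) -> R.
Hypothesis hm : is_mean m.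
Hypothesis hinv : forall s f, Defs.bounded f -> m (fun x => f (op s x)) = m f.

Lemma sumR_cat l1 l2 : sumR (l1 ++ l2) = sumR l1 + sumR l2.
Proof.
elim: l1 => [|a l IH] /=; first by rewrite /sumR /=; lra.
change (a + sumR (l ++ l2) = (a + sumR l) + sumR l2); rewrite IH; lra.
Qed.

Lemma sum_ind_eq (g : M -> nat) (l : seq nat) x : uniq l ->
  sumf [seq ind (fun y => g y = i) | i <- l] x = if g x \in l then 1 else 0.
Proof.
elim: l => [|i l IH] /=; first by rewrite /sumf.
move=> /andP [il ul]. rewrite ?sumf_cons IH // /ind inE.
destruct (pselect (g x = i)) as [gi|gi].
  by rewrite /= gi eqxx (negPf il) /=; lra.
have -> : (g x == i) = false by apply/eqP.
by rewrite /=; lra.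
Qed.

Lemma sum_ind_false (J : eqType) (P : J -> M -> Prop) (l : seq J) x :
  (forall j, j \in l -> ~ P j x) -> sumf [seq ind (P j) | j <- l] x = 0.
Proof.
elim: l => [|j l IH] H /=; first by rewrite /sumf.
rewrite ?sumf_cons IH; last by move=> k kl; apply: H; rewrite inE kl orbT.
rewrite ind_F; first lra.
by apply: (H j) => //; rewrite inE eqxx.
Qed.

Lemma sum_ind_le1 (J : eqType) (P : J -> M -> Prop) (l : seq J) x : uniq l ->
  (forall j j', j \in l -> j' \in l -> P j x -> P j' x -> j = j') ->
  0 <= sumf [seq ind (P j) | j <- l] x <= 1.
Proof.
elim: l => [|j l IH] /=; first by rewrite /sumf /=; lra.
move=> /andP [jl ul] H.
rewrite ?sumf_cons.
destruct (pselect (P j x)) as [pj|pj].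
  rewrite ind_T // sum_ind_false; first lra.
  move=> k kl pk; have jk := H j k (mem_head _ _) ltac:(by rewrite inE kl orbT) pj pk.
  by move: jl; rewrite jk kl.
rewrite ind_F //.
have : 0 <= sumf [seq ind (P j) | j <- l] x <= 1.
  by apply: IH => // k k' kl k'l; apply: H; rewrite inE ?kl ?k'l orbT.
lra.
Qed.

Lemma no_double (S : seq M) (c : M -> bool -> nat) :
  (forall x b, (c x b < size S)%nat) ->
  (forall x b x' b', op (nth e S (c x b)) x = op (nth e S (c x' b')) x' -> x = x' /\ b = b') ->
  False.
Proof.
move=> hc hinj.
pose idx := iota 0 (size S).
pose Bp (p : bool * nat) : M -> Prop := fun x => c x p.1 = p.2.
pose Ip (p : bool * nat) : M -> Prop := fun y => exists x, c x p.1 = p.2 /\ y = op (nth e S p.2) x.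
pose pairs := [seq (true, i) | i <- idx] ++ [seq (false, i) | i <- idx].
pose G := sumf [seq ind (Ip p) | p <- pairs].
have upairs : uniq pairs.
  rewrite cat_uniq !map_inj_uniq ?iota_uniq //; try by move=> ? ? [] .
  rewrite andbT /=; apply/hasPn => p /mapP [i _ ->]; apply/mapP => -[j _]; discriminate.
have hG y : 0 <= G y <= 1.
  apply: sum_ind_le1; first exact: upairs; move=> p q _ _ [x [cx ex]] [x' [cx' ex']].
  rewrite ex -cx -cx' in ex'; have [xx bb] := hinj _ _ _ _ ex'.
  by rewrite [p]surjective_pairing [q]surjective_pairing -cx -cx' xx bb.
have hb : forall (P : M -> Prop), Defs.bounded (ind P) := @ind_bounded M.
have mG1 : Rabs (m G) <= 1.
  have [_ [_ [_ [hn _]]]] := hm; apply: hn => y; have h := hG y; rewrite Rabs_pos_eq; lra.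
have mGs : m G = sumR (map m [seq ind (Ip p) | p <- pairs]).
  by apply: (m_sumf hm) => // f /in_map_iff [p [<- _]].
have IB p : m (ind (Ip p)) = m (ind (Bp p)).
  rewrite -(hinv (nth e S p.2)) //; apply: m_ext => x; rewrite /ind.
  destruct (pselect (Ip p (op (nth e S p.2) x))) as [[x' [cx' ex']]|nI];
  destruct (pselect (Bp p x)) as [bx|nb] => //.
  - by case: nb; have [h1 _] := hcan; rewrite /Bp (h1 _ _ _ ex').
  - by case: nI; exists x.
have hb1 b : sumR (map m [seq ind (Bp p) | p <- [seq (b, i) | i <- idx]]) = 1.
  rewrite -(m_sumf hm); last by move=> f /in_map_iff [p [<- _]].
  have [_ [_ [_ [_ h1]]]] := hm; rewrite -h1; apply: m_ext => x.
  rewrite -map_comp /comp /Bp /=.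
  by rewrite (sum_ind_eq (fun y => c y b)) ?iota_uniq // mem_iota add0n hc.
have : m G = 2.
  rewrite mGs -map_comp (eq_map IB) map_comp /pairs !map_cat sumR_cat.
  rewrite !hb1; lra.
move: mG1; rewrite Rabs_pos_eq; last by rewrite mGs -map_comp (eq_map IB) map_comp /pairs !map_cat sumR_cat hb1 hb1; lra.
lra.
Qed.
End Double.

Lemma undup_size_eq (T : eqType) (s1 s2 : seq T) : s1 =i s2 -> size (undup s1) = size (undup s2).
Proof.
move=> h; apply/eqP; rewrite eqn_leq; apply/andP; split; apply: uniq_leq_size;
  rewrite ?undup_uniq // => x; rewrite !mem_undup h //.
Qed.

Section Expand.
Local Open Scope R_scope.
Variable T : eqType.
Variables (op : T -> T -> T) (e : T).
Hypothesis hmon : is_monoid op e.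
Hypothesis hcan : cancellative op.
Variable K : seq T.
Variable d : R.
Hypothesis hd : (0 < d).

Definition prodl (S P : seq T) := [seq op s x | s <- S, x <- P].
Definition exs S P := size (undup (prodl S P)).

Hypothesis nofol : forall F, uniq F -> (0 < size F)%N -> exists2 k, k \in K &
   (d * INR (size F) < INR (count (fun y => op k y \notin F) F)).

Lemma ex_A P : uniq P -> ((1 + d) * INR (size P) <= INR (exs (e :: K) P)).
Proof.
move=> uP; case: (posnP (size P)) => [/size0nil -> | P0].
  by rewrite /= Rmult_0_r; apply: pos_INR.
have [k kK hk] := nofol uP P0.
pose L := P ++ [seq op k y | y <- P & op k y \notin P].
have uL : uniq L.
  rewrite cat_uniq uP map_inj_uniq ?filter_uniq //=; last first.
    by move=> y y' /(proj1 hcan).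
  rewrite andbT; apply/hasPn => z /mapP [y]; rewrite mem_filter => /andP [nP _] ->.
  exact: nP.
have sL : {subset L <= undup (prodl (e :: K) P)}.
  move=> z; rewrite mem_undup mem_cat => /orP [zP|/mapP [y]].
    have [_ [h1 _]] := hmon; rewrite -(h1 z); apply: allpairs_f => //; exact: mem_head.
  rewrite mem_filter => /andP [_ yP] ->; apply: allpairs_f => //.
  by rewrite inE kK orbT.
have := uniq_leq_size uL sL; rewrite size_cat size_map size_filter => /leP /le_INR.
rewrite plus_INR /exs; lra.
Qed.

Fixpoint powl (n : nat) : seq T :=
  if n is n'.+1 then prodl (e :: K) (powl n') else [:: e].

Lemma ex_pow n P : uniq P -> ((1 + d) ^ n * INR (size P) <= INR (exs (powl n) P)).
Proof.
move=> uP; elim: n => [|n IH].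
  rewrite /= Rmult_1_l /exs; apply: le_INR; apply/leP; apply: uniq_leq_size => // x xP.
  have [_ [h1 _]] := hmon; rewrite mem_undup -(h1 x); apply: allpairs_f => //.
  exact: mem_head.
have -> : exs (powl n.+1) P = exs (e :: K) (undup (prodl (powl n) P)).
  rewrite /exs; apply: undup_size_eq => z; apply/allpairsP/allpairsP.
  - move=> [[s x] /= [/allpairsP [[a t] /= [aA tS ->]] xP ->]].
    exists (a, op t x) => /=; split => //; last by have [h _] := hmon; rewrite h.
    by rewrite mem_undup; apply: allpairs_f.
  - move=> [[a y] /= [aA]]; rewrite mem_undup => /allpairsP [[t x] /= [tS xP ->]] ->.
    exists (op a t, x) => /=; split => //; last by have [h _] := hmon; rewrite h.
    by apply: allpairs_f.
have := ex_A (undup_uniq (prodl (powl n) P)).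
rewrite -/(exs (powl n) P) /= => h.
have hp : (0 <= (1 + d)) by lra.
apply: Rle_trans h; rewrite Rmult_assoc; apply: Rmult_le_compat_l => //.
Qed.

Lemma bernoulli n : (1 + INR n * d <= (1 + d) ^ n).
Proof.
elim: n => [|n IH]; first by simpl; lra.
rewrite S_INR; change ((1 + d) ^ n.+1) with ((1 + d) * (1 + d) ^ n).
have : (0 <= INR n) by apply: pos_INR.
have : (0 <= (1 + d) ^ n) by apply: pow_le; lra.
nra.
Qed.

Lemma ex_double : exists S : seq T, forall P, uniq P -> (2 * size P <= exs S P)%N.
Proof.
have [n hn] : exists n : nat, (1 <= INR n * d).
  have [n hn] := INR_archimed d 1 hd; exists n; lra.
exists (powl n) => P uP; apply/leP; apply: INR_le; rewrite mult_INR.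
have := ex_pow n uP; have := bernoulli n.
have : (0 <= INR (size P)) by apply: pos_INR.
rewrite /= => h1 h2 h3.
have : (2 <= (1 + d) ^ n) by lra.
nra.
Qed.
End Expand.

Section Folner.
Variable T : eqType.
Variables (op : T -> T -> T) (e : T).
Hypothesis hmon : is_monoid op e.
Hypothesis hcan : cancellative op.
Variable m : (T -> R) -> R.
Hypothesis hm : is_mean m.
Hypothesis hinv : forall s f, Defs.bounded f -> m (fun x => f (op s x)) = m f.

Lemma no_expand (S : seq T) : ~ (forall P, uniq P -> 2 * size P <= exs op S P).
Proof.
move=> hS.
pose X := (T * bool)%type.
pose N (p : X) := [seq op s p.1 | s <- S].
pose C (p p' : X) (i j : nat) := p <> p' -> op (nth e S i) p.1 <> op (nth e S j) p'.1.
have loc : forall F : seq X, exists c : X -> nat, (forall p, p \in F -> c p < size S) /\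
    (forall p p', p \in F -> p' \in F -> C p p' (c p) (c p')).
  move=> F.
  pose P0 := undup (map fst F).
  pose l := [seq (x, b) | x <- P0, b <- [:: true; false]].
  have ul : uniq l.
    apply: allpairs_uniq => //; first exact: undup_uniq.
    by move=> [x b] [x' b'] _ _ /= [-> ->].
  have hl : hallc N l.
    move=> A uA sAl.
    pose P := undup (map fst A).
    have h1 : size A <= 2 * size P.
      have := uniq_leq_size (s2 := [seq (x, b) | x <- P, b <- [:: true; false]]) uA.
      rewrite size_allpairs /= muln2 -addnn mul2n -addnn; apply => -[x b] pA.
      apply/flatten_mapP; exists x; first by rewrite mem_undup; apply/mapP; exists (x, b).
      by case: b {pA}; rewrite !inE eqxx ?orbT.
    have h2 : exs op S P <= size (NA N A).
      apply: uniq_leq_size; first exact: undup_uniq.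
      move=> z; rewrite mem_undup => /allpairsP [[s x] /= [sS xP ->]].
      move: xP; rewrite mem_undup => /mapP [p pA ->].
      by rewrite mem_NA; apply/hasP; exists p => //; exact: (map_f (fun s0 => op s0 p.1)).
    apply: leq_trans h1 _; apply: leq_trans h2; apply: hS; exact: undup_uniq.
  have [f [finj fin]] := hall e ul hl.
  exists (fun p => index (f p) (N p)).
  have Fl p : p \in F -> p \in l.
    case: p => x b pF; apply/allpairsP; exists (x, b); split => //=; first by rewrite mem_undup; apply/mapP; exists (x, b).
    by case: b {pF}.
  have key p : p \in F -> op (nth e S (index (f p) (N p))) p.1 = f p.
    move=> pF; have fN := fin p (Fl p pF).
    have := nth_index (op e p.1) fN; rewrite (nth_map e) //.
    by rewrite -(size_map (fun s => op s p.1)) index_mem.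
  split.
    move=> p pF; rewrite -(size_map (fun s => op s p.1)) index_mem; exact: fin (Fl p pF).
  move=> p p' pF p'F neq; rewrite !key //; move=> eqf; apply: neq.
  by apply: finj => //; apply: Fl.
have [c [cS cC]] := ultra_glue loc.
apply: (@no_double _ op e hcan m hm hinv S (fun x b => c (x, b))) => // x b x' b' heq.
have [E|ne] := boolP ((x, b) == (x', b')).
  by move/eqP: E => [-> ->].
exfalso; have h := cC (x, b) (x', b'); rewrite /C /= in h.
by apply: h => //; apply/eqP.
Qed.

Theorem folner (K : seq T) (d : R) : Rlt 0 d ->
  exists F : seq T, [/\ uniq F, 0 < size F &
    forall k, k \in K -> Rle (INR (count (fun y => op k y \notin F) F)) (Rmult d (INR (size F)))].
Proof.
move=> hd; apply: contrapT => nF.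
have nofol : forall F, uniq F -> 0 < size F -> exists2 k, k \in K &
   Rlt (Rmult d (INR (size F))) (INR (count (fun y => op k y \notin F) F)).
  move=> F uF F0.
  case: (pselect (exists2 k, k \in K & Rlt (Rmult d (INR (size F))) (INR (count (fun y => op k y \notin F) F)))) => // nk.
  exfalso; apply: nF; exists F; split => // k kK.
  apply: Rnot_lt_le => hlt; apply: nk; by exists k.
have [S hS] := ex_double hmon hcan hd nofol.
exact: (no_expand hS).
Qed.
End Folner.

Lemma card_pred_val (T : choiceType) (F : seq T) (P : pred T) : uniq F ->
  #|[pred x : seq_sub F | P (val x)]| = count P F.
Proof.
move=> uF; have <- : count (preim val P) (seq_sub_enum F) = count P F.
  by rewrite -count_map val_seq_sub_enum.
by rewrite cardE /enum_mem size_filter unlock.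
Qed.

Lemma In_mem (T : eqType) (x : T) (l : seq T) : List.In x l -> x \in l.
Proof.
elim: l => [//|a l IH] /= [->|h]; first by rewrite inE eqxx.
by rewrite inE IH ?orbT.
Qed.

Lemma count_predC2 (T : Type) (a b : pred T) (s : seq T) :
  count (predC (predI a b)) s <= count (predC a) s + count (predC b) s.
Proof.
elim: s => [//|x s IH] /=; rewrite addnACA; apply: leq_add => //.
by case: (a x); case: (b x).
Qed.

Lemma count_predU2 (T : Type) (a b : pred T) (s : seq T) :
  count (predU a b) s <= count a s + count b s.
Proof.
elim: s => [//|x s IH] /=; rewrite addnACA; apply: leq_add => //.
by case: (a x); case: (b x).
Qed.

Section Build.
Local Open Scope R_scope.

Lemma div_ge a c n : 0 < n -> a * n <= c -> a <= c / n.
Proof.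
move=> hn h; apply: (Rmult_le_reg_r n) => //; rewrite /Rdiv Rmult_assoc Rinv_l; lra.
Qed.

Lemma div_le c n a : 0 < n -> c <= a * n -> c / n <= a.
Proof.
move=> hn h; apply: (Rmult_le_reg_r n) => //; rewrite /Rdiv Rmult_assoc Rinv_l; lra.
Qed.

Variable T : choiceType.
Variables (op : T -> T -> T) (e : T).

Lemma build (K : seq T) (eps : R) (F : seq T) (phiv : T -> T -> T) (G : T -> T -> bool) :
  0 < eps -> uniq F -> (0 < size F)%N ->
  (forall k x, x \in F -> phiv k x \in F) ->
  (forall k, k \in e :: K ++ [seq op k1 k2 | k1 <- K, k2 <- K] ->
     INR (count (predC (G k)) F) <= eps / 2 * INR (size F)) ->
  (forall x, x \in F -> G e x -> phiv e x = x) ->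
  (forall k1 k2 x, x \in F -> k1 <> k2 -> G k1 x -> G k2 x -> phiv k1 x <> phiv k2 x) ->
  (forall k1 k2 x, x \in F -> G k2 x -> G (op k1 k2) x -> phiv (op k1 k2) x = phiv k1 (phiv k2 x)) ->
  exists X : finType, #|X| != 0%N /\ exists phi : T -> X -> X,
    is_K_alpha_injective K (1 - eps) phi /\ is_K_eps_morphism op e K eps phi.
Proof.
move=> he uF F0 hin hc hid hinj hmor.
pose X : finType := seq_sub F.
have cX : #|X| = size F by rewrite card_seq_sub.
have nF : 0 < INR (size F) by apply: lt_0_INR; apply/ltP.
pose phi k (x : X) : X := insubd x (phiv k (val x)).
have vphi k (x : X) : val (phi k x) = phiv k (val x).
  by rewrite /phi insubdK //; apply: hin; exact: (valP x).
have cK k : k \in K -> INR (count (predC (G k)) F) <= eps / 2 * INR (size F).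
  by move=> kK; apply: hc; rewrite inE mem_cat kK orbT.
have ham_le (f g : X -> X) (B : pred T) : (forall x, f x != g x -> B (val x)) ->
    hamming f g <= INR (count B F) / INR (size F).
  move=> hB; rewrite /hamming cX; apply: Rmult_le_compat_r.
    by apply: Rlt_le; apply: Rinv_0_lt_compat.
  apply: le_INR; apply/leP; rewrite -card_pred_val //; apply: subset_leq_card.
  by apply/fintype.subsetP => x; rewrite !inE; apply: hB.
have ham_ge (f g : X -> X) (A : pred T) : (forall x, A (val x) -> f x != g x) ->
    INR (count A F) / INR (size F) <= hamming f g.
  move=> hA; rewrite /hamming cX; apply: Rmult_le_compat_r.
    by apply: Rlt_le; apply: Rinv_0_lt_compat.
  apply: le_INR; apply/leP; rewrite -card_pred_val //; apply: subset_leq_card.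
  by apply/fintype.subsetP => x; rewrite !inE; apply: hA.
exists X; split; first by rewrite cX -lt0n.
exists phi; split.
- move=> k1 k2 /In_mem k1K /In_mem k2K k12.
  apply: Rle_trans (ham_ge _ _ (predI (G k1) (G k2)) _); last first.
    move=> x /andP [g1 g2]; apply/negP => /eqP /(congr1 val); rewrite !vphi.
    by apply: hinj => //; exact: (valP x).
  apply: div_ge => //.
  have h1 := count_predC2 (G k1) (G k2) F.
  have h2 := count_predC (predI (G k1) (G k2)) F.
  have := cK _ k1K; have := cK _ k2K.
  move/leP: h1 => /le_INR; rewrite plus_INR.
  move: h2 => /(congr1 INR); rewrite plus_INR => h2.
  lra.
- split.
  + move=> k1 k2 /In_mem k1K /In_mem k2K.
    apply: Rle_trans (ham_le _ _ (predU (predC (G k2)) (predC (G (op k1 k2)))) _) _.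
      move=> x; apply: contraR; rewrite negb_or !negbK => /andP [g2 g12].
      apply/eqP; apply: val_inj; rewrite !vphi hmor //; exact: (valP x).
    apply: div_le => //.
    have h1 := count_predU2 (predC (G k2)) (predC (G (op k1 k2))) F.
    have := cK _ k2K.
    have : INR (count (predC (G (op k1 k2))) F) <= eps / 2 * INR (size F).
      by apply: hc; rewrite inE mem_cat; apply/orP; right; apply/orP; right; apply: allpairs_f.
    move/leP: h1 => /le_INR; rewrite plus_INR.
    lra.
  + apply: Rle_trans (ham_le _ _ (predC (G e)) _) _.
      move=> x; apply: contraR => /negbNE ge; apply/eqP; apply: val_inj.
      by rewrite vphi hid //=; exact: (valP x).
    apply: div_le => //.
    have : INR (count (predC (G e)) F) <= eps / 2 * INR (size F) by apply: hc; exact: mem_head.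
    nra.
Qed.
End Build.

Lemma count_shift (T : eqType) (f : T -> T) (F : seq T) : injective f -> uniq F ->
  count (fun x => ~~ has (fun y => f y == x) F) F = count (fun y => f y \notin F) F.
Proof.
move=> finj uF.
have h : count (fun x => has (fun y => f y == x) F) F = count (fun y => f y \in F) F.
  rewrite -!size_filter -(size_map f [seq y <- F | f y \in F]).
  apply: perm_size; apply: uniq_perm.
  - exact: filter_uniq.
  - by rewrite map_inj_uniq // filter_uniq.
  - move=> z; rewrite mem_filter; apply/andP/mapP.
    + move=> [/hasP [y yF /eqP fy] zF]; exists y; rewrite ?mem_filter ?fy ?zF //.
    + move=> [y]; rewrite mem_filter => /andP [fyF yF] ->; split => //.
      by apply/hasP; exists y.
have := count_predC (fun x => has (fun y => f y == x) F) F.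
have := count_predC (fun y => f y \in F) F.
rewrite h => <- /eqP; rewrite eqn_add2l => /eqP.
by [].
Qed.

Theorem proposition4p7 (M : Type) (op : M -> M -> M) (e : M) :
  is_monoid op e -> cancellative op ->
  (left_amenable op \/ right_amenable op) ->
  sofic op e.
Proof.
move=> hmon hcan hamen K eps he.
pose T : choiceType := {classic M}.
pose K' : seq T := e :: K ++ [seq (op : T -> T -> T) k1 k2 | k1 <- K, k2 <- K].
have he2 : Rlt 0 (Rdiv eps 2) by lra.
case: hamen => [[m [hm hinv]] | [m [hm hinv]]].
- have [F [uF F0 hF]] := @folner T op e hmon hcan m hm hinv K' _ he2.
  apply: (@build T op e K eps F (fun k x => if op k x \in F then op k x else x)
            (fun k x => op k x \in F)) => //.
  + by move=> k x xF; case: ifP.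
  + move=> x xF; have [_ [h1 _]] := hmon; by rewrite h1; case: ifP.
  + move=> k1 k2 x xF k12 g1 g2; rewrite g1 g2 => h; apply: k12.
    exact: (proj2 hcan) h.
  + move=> k1 k2 x xF g2 g12; rewrite g2 g12.
    have [ha _] := hmon; by rewrite ha g12.
- pose op' (x y : T) : T := op y x.
  have hmon' : is_monoid op' e.
    have [ha [h1 h2]] := hmon; split; last by split.
    by move=> a b c; rewrite /op' ha.
  have hcan' : cancellative op' by have [c1 c2] := hcan; split => s t t' h; [apply: (c2 s)|apply: (c1 s)].
  have [F [uF F0 hF]] := @folner T op' e hmon' hcan' m hm hinv K' _ he2.
  pose G (k x : T) := has (fun y : T => (op y k : T) == x) F.
  pose phiv (k x : T) := nth x F (find (fun y : T => (op y k : T) == x) F).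
  have spec k x : G k x -> phiv k x \in F /\ op (phiv k x) k = x.
    move=> g; split; first by apply: mem_nth; rewrite -has_find.
    by have := nth_find x g; move/eqP.
  have can2 : forall s t t', op t s = op t' s -> t = t' := proj2 hcan.
  apply: (@build T op e K eps F phiv G) => //.
  + move=> k x xF; case g: (G k x); first exact: (proj1 (spec k x g)).
    rewrite /phiv nth_default //; move: g; rewrite /G has_find => /negbT.
    by rewrite -leqNgt.
  + move=> k kK; have := hF k kK.
    rewrite -(@count_shift T (fun y : T => (op y k : T)) F) //; last by move=> y y'; apply: can2.
  + move=> x xF g; have [_ h2] := spec e x g.
    by have [_ [_ h3]] := hmon; rewrite h3 in h2.
  + move=> k1 k2 x xF k12 g1 g2 eq; apply: k12.
    have [_ h1] := spec k1 x g1; have [_ h2] := spec k2 x g2.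
    by apply: (proj1 hcan (phiv k1 x)); rewrite h1 eq h2.
  + move=> k1 k2 x xF g2 g12.
    have [zF hz] := spec k2 x g2; have [wF hw] := spec (op k1 k2) x g12.
    have hwz : op (phiv (op k1 k2) x) k1 = phiv k2 x.
      apply: (can2 k2); rewrite hz; have [ha _] := hmon; by rewrite -ha.
    have g1 : G k1 (phiv k2 x) by apply/hasP; exists (phiv (op k1 k2) x) => //; apply/eqP.
    have [_ h1] := spec k1 _ g1.
    by apply: (can2 k1); rewrite h1 hwz.
Qed.
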